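(* Every unbounded moral-hazard preference $\succeq$ on $W$ admits exactly one parsimonious representation $(c,u)$.
   Context: $S$ non-empty finite, $\Delta(S)$ its simplex; $\Pi\subseteq\mathbb{R}$ convex; $\Delta(\Pi)$ finite-support distributions on $\Pi$; contracts $w:S\to\Delta(\Pi)$, set $W$; constant contracts identified with elements of $\Delta(\Pi)$. Mixtures $\alpha x+(1-\alpha)x'$ are probability mixtures. $u:\Pi\to\mathbb{R}$ extends to $\Delta(\Pi)$ by expectation. Fixed reference prizes $\pi_0<\pi_1$ in $\Pi$; $u$ is normalised iff $\{u(\pi_0),u(\pi_1)\}=\{0,1\}$. Grounded: infimum $0$. A parsimonious representation of $\succeq$ is a pair $(c,u)$ with $c:\Delta(S)\to[0,\infty]$ grounded, convex and lower semi-continuous and $u:\Pi\to\mathbb{R}$ strictly increasing and normalised, such that for all $w,w'\in W$: $w\succeq w'$ iff $\max_{p\in\Delta(S)}[-c(p)+\sum_s u(w(s))p(s)]\ge \max_{p\in\Delta(S)}[-c(p)+\sum_s u(w'(s))p(s)]$. A moral-hazard preference is a relation generated by a standard moral-hazard model (compact convex effort set $E\subseteq\mathbb{R}^n$, grounded lsc cost $C:E\to\mathbb{R}_+$, continuous $e\mapsto P_e\in\Delta(S)$, strictly increasing normalised $u$, agent valuing $w$ by $\sup_{\mu\in\Delta(E)}\int_E[-C(e)+\sum_s u(w(s))P_e(s)]\mu(\mathrm{d}e)$); equivalently, a relation admitting some parsimonious representation. $\succeq$ is unbounded iff there are $x\succ y$ in $\Delta(\Pi)$ such that for every $\alpha\in(0,1)$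 there exist $z,z'\in\Delta(\Pi)$ with $y\succ \alpha z+(1-\alpha)x$ and $\alpha z'+(1-\alpha)y\succ x$ (where $\succ$ is the strict part of $\succeq$). *)

(* Defs.v *)
From HB Require Import structures.
From mathcomp Require Import all_boot all_order all_algebra.
From mathcomp Require Import boolp classical_sets functions cardinality fsbigop reals constructive_ereal ereal.
Set Implicit Arguments. Unset Strict Implicit. Unset Printing Implicit Defensive.
Import Order.TTheory GRing.Theory Num.Theory.
Local Open Scope classical_set_scope.
Local Open Scope ring_scope.

Section MH.
Variables (R : realType) (S : finType).

(* A (raw) lottery is a function prize |-> probability; a mh_contract assigns a
   lottery to every state. *)
Definition lottery := R -> R.
Definition mh_contract := S -> lottery.

Definition lsupp (f : lottery) : set R := [set x | f x != 0].

Definition is_lottery (Pi : set R) (f : lottery) : Prop :=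
  [/\ forall x, 0 <= f x,
      finite_set (lsupp f),
      lsupp f `<=` Pi &
      \sum_(x \in lsupp f) f x = 1].

Definition is_contract (Pi : set R) (w : mh_contract) : Prop :=
  forall s, is_lottery Pi (w s).

Definition const_contract (x : lottery) : mh_contract := fun _ => x.

Definition mix (a : R) (x x' : lottery) : lottery := fun p => a * x p + (1 - a) * x' p.

Definition EU (u : R -> R) (f : lottery) : R := \sum_(x \in lsupp f) f x * u x.

Definition simplex (p : S -> R) : Prop := (forall s, 0 <= p s) /\ \sum_s p s = 1.

Definition convex_set_R (Pi : set R) : Prop :=
  forall x y z, Pi x -> Pi y -> x <= z -> z <= y -> Pi z.

Definition cost_nonneg (c : (S -> R) -> \bar R) : Prop :=
  forall p, simplex p -> (0 <= c p)%E.

Definition grounded (c : (S -> R) -> \bar R) : Prop :=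
  ereal_inf [set c p | p in simplex] = 0%E.

Definition cost_convex (c : (S -> R) -> \bar R) : Prop :=
  forall p q (a : R), simplex p -> simplex q -> 0 < a -> a < 1 ->
    (c (fun s => (a * p s + (1 - a) * q s)%R) <= a%:E * c p + (1 - a)%:E * c q)%E.

Definition cost_lsc (c : (S -> R) -> \bar R) : Prop :=
  forall p (a : R), simplex p -> (a%:E < c p)%E ->
    exists2 eps : R, 0 < eps &
      forall q, simplex q -> (forall s, `|q s - p s| < eps) -> (a%:E < c q)%E.

Definition strictly_increasing_on (Pi : set R) (u : R -> R) : Prop :=
  forall x y, Pi x -> Pi y -> x < y -> u x < u y.

Definition normalised (pi0 pi1 : R) (u : R -> R) : Prop :=
  (u pi0 = 0 /\ u pi1 = 1) \/ (u pi0 = 1 /\ u pi1 = 0).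

Definition value (c : (S -> R) -> \bar R) (u : R -> R) (w : mh_contract) : \bar R :=
  ereal_sup [set (- c p + (\sum_s EU u (w s) * p s)%:E)%E | p in simplex].

Definition parsimonious_rep (Pi : set R) (pi0 pi1 : R)
    (pref : mh_contract -> mh_contract -> Prop)
    (c : (S -> R) -> \bar R) (u : R -> R) : Prop :=
  [/\ cost_nonneg c /\ grounded c /\ cost_convex c /\ cost_lsc c,
      strictly_increasing_on Pi u, normalised pi0 pi1 u &
      forall w w', is_contract Pi w -> is_contract Pi w' ->
        (pref w w' <-> (value c u w' <= value c u w)%E)].

Definition moral_hazard_pref (Pi : set R) (pi0 pi1 : R)
    (pref : mh_contract -> mh_contract -> Prop) : Prop :=
  exists c u, parsimonious_rep Pi pi0 pi1 pref c u.

Definition spref (pref : mh_contract -> mh_contract -> Prop) (w w' : mh_contract) : Prop :=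
  pref w w' /\ ~ pref w' w.

Definition unbounded (Pi : set R) (pref : mh_contract -> mh_contract -> Prop) : Prop :=
  exists x y, [/\ is_lottery Pi x, is_lottery Pi y,
    spref pref (const_contract x) (const_contract y) &
    forall a : R, 0 < a -> a < 1 ->
      exists z z', [/\ is_lottery Pi z, is_lottery Pi z',
        spref pref (const_contract y) (const_contract (mix a z x)) &
        spref pref (const_contract (mix a z' y)) (const_contract x)]].

End MH.

(* Main.v *)
Require Import Defs.
From mathcomp Require Import all_boot all_order all_algebra.
From mathcomp Require Import boolp classical_sets cardinality fsbigop reals constructive_ereal ereal.
From mathcomp Require Import ring lra.
Import Order.TTheory GRing.Theory Num.Theory.
Local Open Scope classical_set_scope.
Local Open Scope ring_scope.
Set Implicit Arguments. Unset Strict Implicit.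

Section Lot.
Variables (R : realType) (Pi : set R).

Lemma widen_supp (f F : lottery R) (A : set R) :
  lsupp f `<=` A -> (forall y, f y = 0 -> F y = 0) ->
  \sum_(y \in lsupp f) F y = \sum_(y \in A) F y.
Proof.
move=> fA F0; apply: fsbig_widen => // y [Ay] /=.
rewrite /lsupp /= => /negP; rewrite negbK => /eqP fy0.
by rewrite F0.
Qed.

Definition dirac (x : R) : lottery R := fun y => if y == x then 1 else 0.

Lemma lsupp_dirac x : lsupp (dirac x) = [set x].
Proof.
apply/seteqP; split => y; rewrite /lsupp /dirac /=.
  by case: ifP => [/eqP //|_]; rewrite eqxx.
by move=> ->; rewrite eqxx oner_neq0.
Qed.

Lemma dirac_lot x : Pi x -> is_lottery Pi (dirac x).
Proof.
move=> Px; rewrite /is_lottery lsupp_dirac; split.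
- by move=> y; rewrite /dirac; case: eqP.
- exact: finite_set1.
- by move=> y ->.
- by rewrite fsbig_set1 /dirac eqxx.
Qed.

Lemma EU_dirac u x : EU u (dirac x) = u x.
Proof. by rewrite /EU lsupp_dirac fsbig_set1 /dirac eqxx mul1r. Qed.

Lemma mix_lot a z x : 0 <= a <= 1 -> is_lottery Pi z -> is_lottery Pi x ->
  is_lottery Pi (mix a z x) /\
  forall u, EU u (mix a z x) = a * EU u z + (1 - a) * EU u x.
Proof.
move=> /andP[a0 a1] [z0 zf zP z1] [x0 xf xP x1].
set A := lsupp z `|` lsupp x.
have Af : finite_set A by rewrite finite_setU.
have sA : lsupp (mix a z x) `<=` A.
  move=> y; rewrite /lsupp /mix /=; apply: contraPP => /not_orP[/negP zy /negP xy].
  by move: zy xy; rewrite !negbK => /eqP -> /eqP ->; rewrite !mulr0 addr0 eqxx.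
have zA : lsupp z `<=` A by move=> y ?; left.
have xA : lsupp x `<=` A by move=> y ?; right.
have key : forall F : R -> R,
   \sum_(y \in A) (a * (z y * F y) + (1 - a) * (x y * F y)) =
   a * \sum_(y \in lsupp z) z y * F y + (1 - a) * \sum_(y \in lsupp x) x y * F y.
  move=> F.
  rewrite fsbig_split // -!mulr_fsumr.
  rewrite (widen_supp zA); last by move=> y ->; rewrite mul0r.
  by rewrite (widen_supp xA) // => y ->; rewrite mul0r.
split; last first.
  move=> u; rewrite /EU (widen_supp sA); last by move=> y ->; rewrite mul0r.
  rewrite -key //.
  by apply: eq_fsbigr => y _; rewrite /mix; ring.
split.
- by move=> y; rewrite /mix addr_ge0 // mulr_ge0 // subr_ge0.
- exact: sub_finite_set Af.
- by move=> y /sA [/zP|/xP].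
- rewrite (widen_supp sA) //.
  have ez : \sum_(y \in lsupp z) z y * 1 = 1.
    by rewrite -[RHS]z1; apply: eq_fsbigr => y _; rewrite mulr1.
  have ex : \sum_(y \in lsupp x) x y * 1 = 1.
    by rewrite -[RHS]x1; apply: eq_fsbigr => y _; rewrite mulr1.
  have k := key (fun _ => 1); rewrite /= ez ex in k.
  rewrite (_ : 1 = a * 1 + (1 - a) * 1); last by ring.
  rewrite -k; apply: eq_fsbigr => y _; rewrite /mix; ring.
Qed.

Lemma EU_eq u1 u2 z : {in Pi, u1 =1 u2} -> is_lottery Pi z -> EU u1 z = EU u2 z.
Proof.
move=> eu [_ _ zP _]; apply: eq_fsbigr => y; rewrite inE => /zP Py.
by rewrite eu // inE.
Qed.

End Lot.

Section Val.
Variables (R : realType) (S : finType).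
Local Notation K := (@simplex R S).
Implicit Types (c : (S -> R) -> \bar R) (u : R -> R).

Lemma sum_simplex (e : R) (p : S -> R) : simplex p -> \sum_s e * p s = e.
Proof. by move=> [_ p1]; rewrite -mulr_sumr p1 mulr1. Qed.

Lemma grounded_small c : grounded c -> forall eps : R, 0 < eps ->
  exists2 p, simplex p & (c p < eps%:E)%E.
Proof.
move=> g eps e0.
have : (ereal_inf [set c p | p in K] < eps%:E)%E by rewrite g lte_fin.
by move=> /ereal_inf_lt [_ [p Sp <-] lt]; exists p.
Qed.

Lemma value_const c u (z : lottery R) : cost_nonneg c -> grounded c ->
  value c u (@const_contract R S z) = (EU u z)%:E.
Proof.
move=> c0 g; rewrite /value /const_contract.
apply/eqP; rewrite eq_le; apply/andP; split.
  apply: ge_ereal_sup => _ [p Sp <-].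
  by rewrite sum_simplex // geeDr // leeNl oppe0 c0.
apply/lee_subgt0Pr => eps e0.
have [p Sp cp] := grounded_small g e0.
apply: le_ereal_sup_tmp; exists (- c p + (EU u z)%:E)%E; first by exists p => //; rewrite sum_simplex.
move: (c0 p Sp) cp; case: (c p) => [r| |] //.
rewrite !lee_fin lte_fin => r0 re.
lra.
Qed.

End Val.

Section Rep.
Variables (R : realType) (S : finType) (Pi : set R) (pi0 pi1 : R)
  (pref : mh_contract R S -> mh_contract R S -> Prop).
Local Notation K := (@simplex R S).
Local Notation cst := (@const_contract R S).
Implicit Types (c : (S -> R) -> \bar R) (u : R -> R).

Lemma const_contractP x : is_lottery Pi x -> is_contract Pi (cst x).
Proof. by move=> hx s. Qed.

Lemma rep_const c u x y : parsimonious_rep Pi pi0 pi1 pref c u ->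
  is_lottery Pi x -> is_lottery Pi y ->
  (pref (cst x) (cst y) <-> EU u y <= EU u x).
Proof.
move=> [[c0 [g _]] _ _ rep] hx hy.
rewrite rep ?const_contractP // !value_const // lee_fin //.
Qed.

Lemma rep_norm c u : Pi pi0 -> Pi pi1 -> pi0 < pi1 ->
  parsimonious_rep Pi pi0 pi1 pref c u -> u pi0 = 0 /\ u pi1 = 1.
Proof.
move=> P0 P1 lt [_ inc [//|[e0 e1]] _].
have := inc _ _ P0 P1 lt; rewrite e0 e1 => /(lt_trans ltr01); by rewrite ltxx.
Qed.

Lemma u_unique c1 u1 c2 u2 : Pi pi0 -> Pi pi1 -> pi0 < pi1 ->
  parsimonious_rep Pi pi0 pi1 pref c1 u1 ->
  parsimonious_rep Pi pi0 pi1 pref c2 u2 ->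
  forall x, Pi x -> u2 x = u1 x.
Proof.
move=> P0 P1 lt r1 r2 x Px.
have [a0 a1] := rep_norm P0 P1 lt r1.
have [b0 b1] := rep_norm P0 P1 lt r2.
have tr : forall m n, is_lottery Pi m -> is_lottery Pi n ->
    EU u1 m = EU u1 n -> EU u2 m = EU u2 n.
  move=> m n hm hn e; apply/eqP; rewrite eq_le.
  apply/andP; split.
    by apply/(rep_const r2 hn hm)/(rep_const r1 hn hm); rewrite e.
  by apply/(rep_const r2 hm hn)/(rep_const r1 hm hn); rewrite e.
have D0 := dirac_lot P0; have D1 := dirac_lot P1; have Dx := dirac_lot Px.
set t := u1 x.
have [t0|t0] := ltP t 0.
  set s := (1 - t)^-1.
  have s01 : 0 <= s <= 1.
    by apply/andP; split; [rewrite /s invr_ge0; lra | rewrite /s invf_le1; lra].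
  have st : s * (1 - t) = 1 by rewrite /s mulVf //; lra.
  have [hm em] := mix_lot s01 Dx D1.
  have h := tr _ _ hm D0; rewrite !em !EU_dirac a0 a1 b0 b1 -/t in h.
  have h2 : s * u2 x + (1 - s) * 1 = 0 by apply: h; nra.
  nra.
have [t1|t1] := ltP 1 t.
  set s := t^-1.
  have s01 : 0 <= s <= 1.
    by apply/andP; split; [rewrite /s invr_ge0; lra | rewrite /s invf_le1; lra].
  have st : s * t = 1 by rewrite /s mulVf //; lra.
  have [hm em] := mix_lot s01 Dx D0.
  have h := tr _ _ hm D1; rewrite !em !EU_dirac a0 a1 b0 b1 -/t in h.
  have h2 : s * u2 x + (1 - s) * 0 = 1 by apply: h; nra.
  nra.
have t01 : 0 <= t <= 1 by lra.
have [hm em] := mix_lot t01 D1 D0.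
have h := tr _ _ hm Dx; rewrite !em !EU_dirac a0 a1 b0 b1 -/t in h.
have h2 : t * 1 + (1 - t) * 0 = u2 x by apply: h; nra.
nra.
Qed.

End Rep.

Section Onto.
Variables (R : realType) (S : finType) (Pi : set R) (pi0 pi1 : R)
  (pref : mh_contract R S -> mh_contract R S -> Prop).
Local Notation K := (@simplex R S).
Local Notation cst := (@const_contract R S).
Implicit Types (c : (S -> R) -> \bar R) (u : R -> R).

Lemma EU_onto c u : parsimonious_rep Pi pi0 pi1 pref c u -> unbounded Pi pref ->
  forall V, exists z, is_lottery Pi z /\ EU u z = V.
Proof.
move=> rp [x [y [hx hy [_ nyx] H]]] V.
have lxy : EU u y < EU u x.
  by rewrite ltNge; apply/negP => /(rep_const rp hy hx).
set D := EU u x - EU u y.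
set M := D + `|EU u x - V| + `|V - EU u y| + 1.
have Dp : 0 < D by rewrite /D; lra.
have Mp : 0 < M by rewrite /M; have := normr_ge0 (EU u x - V); have := normr_ge0 (V - EU u y); lra.
set a := D / M.
have aM : a * M = D by rewrite /a mulfVK // gt_eqF.
have a0 : 0 < a by rewrite /a divr_gt0.
have a1 : a < 1 by rewrite /a ltr_pdivrMr // mul1r /M; have := normr_ge0 (EU u x - V); have := normr_ge0 (V - EU u y); lra.
have a01 : 0 <= a <= 1 by apply/andP; split; lra.
have [z [z' [hz hz' [_ n1] [_ n2]]]] := H a a0 a1.
have [hm em] := mix_lot a01 hz hx.
have [hm' em'] := mix_lot a01 hz' hy.
have lo : EU u z < V.
  have : a * EU u z + (1 - a) * EU u x < EU u y.
    by rewrite -em ltNge; apply/negP => /(rep_const rp hm hy).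
  move=> h1.
  have h2 : a * (EU u z - EU u x + M) < 0.
    by rewrite mulrDr mulrBr aM /D; lra.
  rewrite pmulr_rlt0 // in h2.
  move: h2; rewrite /M /D.
  have := ler_norm (EU u x - V); have := normr_ge0 (V - EU u y); lra.
have hi : V < EU u z'.
  have : EU u x < a * EU u z' + (1 - a) * EU u y.
    by rewrite -em' ltNge; apply/negP => /(rep_const rp hx hm').
  move=> h1.
  have h2 : 0 < a * (EU u z' - EU u y - M).
    by rewrite mulrBr mulrBr aM /D; lra.
  rewrite pmulr_rgt0 // in h2.
  move: h2; rewrite /M /D.
  have := ler_norm (V - EU u y); have := normr_ge0 (EU u x - V); lra.
set b := (EU u z' - V) / (EU u z' - EU u z).
have dp : 0 < EU u z' - EU u z by lra.
have bd : b * (EU u z' - EU u z) = EU u z' - V by rewrite /b mulfVK // gt_eqF.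
have b01 : 0 <= b <= 1.
  apply/andP; split; first by rewrite /b divr_ge0 //; lra.
  by rewrite /b ler_pdivrMr // mul1r; lra.
have [hb eb] := mix_lot b01 hz hz'.
exists (mix b z z'); split => //; rewrite eb; nra.
Qed.

Lemma contract_onto c u : parsimonious_rep Pi pi0 pi1 pref c u -> unbounded Pi pref ->
  forall U : S -> R, exists w, is_contract Pi w /\ forall s, EU u (w s) = U s.
Proof.
move=> rp ub U.
have [w hw] := choice (fun s => EU_onto rp ub (U s)).
by exists w; split => s; case: (hw s).
Qed.

End Onto.

Section HB.
Variables (R : realType) (S : finType) (f : (S -> R) -> R).
Hypothesis fconv : forall (x y : S -> R) (l : R), 0 < l -> l < 1 ->
  f (fun s => l * x s + (1 - l) * y s) <= l * f x + (1 - l) * f y.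
Variable p : S -> R.

Let L (U h : S -> R) := \sum_s U s * h s.

Lemma subgrad_seq (r : seq S) : exists U : S -> R, forall h : S -> R,
  (forall s, s \notin r -> h s = 0) -> f p + L U h <= f (fun s => p s + h s).
Proof.
elim: r => [|s0 r [U IH]].
  exists (fun _ => 0) => h h0.
  rewrite /L big1 ?addr0; last by move=> s _; rewrite mul0r.
  by rewrite (_ : (fun s => p s + h s) = p) // funeqE => s; rewrite h0 ?addr0.
pose V (v : S -> R) := forall s, s \notin r -> v s = 0.
pose P (v : S -> R) (t : R) := fun s => p s + v s + t * (s == s0)%:R.
have Lsc : forall (l : R) v v', L U (fun s => l * v s + (1 - l) * v' s) = l * L U v + (1 - l) * L U v'.
  move=> l v v'; rewrite /L !mulr_sumr -big_split /=; apply: eq_bigr => s _; ring.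
have key : forall v v' rho sig, V v -> V v' -> 0 < rho -> 0 < sig ->
    (f p + L U v' - f (P v' (- rho))) / rho <= (f (P v sig) - f p - L U v) / sig.
  move=> v v' rho sig Vv Vv' r0 s0p.
  set l := rho / (rho + sig).
  have l0 : 0 < l by rewrite /l divr_gt0 // addr_gt0.
  have l1 : l < 1 by rewrite /l ltr_pdivrMr ?addr_gt0 // mul1r ltrDl.
  have e1 : 1 - l = sig / (rho + sig).
    by rewrite /l; field; rewrite gt_eqF // addr_gt0.
  set w := fun s => l * v s + (1 - l) * v' s.
  have Vw : V w by move=> s sr; rewrite /w Vv // Vv' // !mulr0 addr0.
  have hm := fconv (P v sig) (P v' (- rho)) l0 l1.
  have ePw : (fun s => l * P v sig s + (1 - l) * P v' (- rho) s) = (fun s => p s + w s).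
    rewrite funeqE => s; rewrite /P /w e1 /l.
    have rs : rho + sig != 0 by rewrite gt_eqF // addr_gt0.
    by field.
  rewrite ePw in hm.
  have hw := IH w Vw.
  have Lw : L U w = l * L U v + (1 - l) * L U v' by rewrite /w Lsc.
  have hh : 0 <= l * (f (P v sig) - f p - L U v) + (1 - l) * (f (P v' (- rho)) - f p - L U v') by lra.
  rewrite e1 /l in hh.
  rewrite ler_pdivrMr // mulrAC ler_pdivlMr //.
  have rs : 0 < rho + sig by rewrite addr_gt0.
  rewrite -subr_ge0; move: hh.
  set A := f (P v sig) - f p - L U v; set B := f (P v' (- rho)) - f p - L U v'.
  move=> hh.
  have : 0 <= (rho + sig) * (rho / (rho + sig) * A + sig / (rho + sig) * B) by rewrite mulr_ge0 // ltW.
  rewrite (_ : (rho + sig) * (rho / (rho + sig) * A + sig / (rho + sig) * B) = rho * A + sig * B); last first.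
    by field; rewrite gt_eqF.
  rewrite /A /B => hh2.
  rewrite (_ : (f (P v sig) - f p - L U v) * rho - (f p + L U v' - f (P v' (- rho))) * sig = rho * A + sig * B) //.
  rewrite /A /B; ring.
pose Lo := [set x : R | exists v rho, [/\ V v, 0 < rho & x = (f p + L U v - f (P v (- rho))) / rho]].
have V0 : V (fun _ => 0) by [].
have Lo0 : Lo !=set0 by exists ((f p + L U (fun _ => 0) - f (P (fun _ => 0) (- 1))) / 1), (fun _ => 0), 1.
have Lub : forall v sig, V v -> 0 < sig -> ubound Lo ((f (P v sig) - f p - L U v) / sig).
  by move=> v sig Vv s0p _ [v' [rho [Vv' r0 ->]]]; exact: key.
have hasub : has_ubound Lo by exists ((f (P (fun _ => 0) 1) - f p - L U (fun _ => 0)) / 1); exact: Lub.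
pose alpha := sup Lo.
exists (fun s => if s == s0 then alpha else U s).
move=> h hsupp.
pose v := fun s => if s == s0 then 0 else h s.
pose t := h s0.
have Vv : V v.
  move=> s sr; rewrite /v; case: eqP => // /eqP ns; apply: hsupp.
  by rewrite in_cons negb_or ns sr.
have eh : (fun s => p s + h s) = P v t.
  rewrite funeqE => s; rewrite /P /v /t; case: eqP => [->|_].
    by rewrite mulr1 addr0.
  by rewrite mulr0 addr0.
have eL : L (fun s => if s == s0 then alpha else U s) h = alpha * t + L U v.
  rewrite /L (bigD1 s0) //= [X in _ = _ + X](bigD1 s0) //= !eqxx. rewrite /v eqxx mulr0 add0r.
  by congr (_ + _); apply: eq_bigr => s /negPf ->.
rewrite eh eL.
have [t0|t0|t0] := ltgtP t 0.
- have : (f p + L U v - f (P v (- - t))) / (- t) <= alpha.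
    by apply: ub_le_sup => //; exists v, (- t); split; rewrite ?oppr_gt0.
  rewrite opprK ler_pdivrMr ?oppr_gt0 // mulrN => ha; lra.
- have : alpha <= (f (P v t) - f p - L U v) / t.
    by apply: ge_sup => //; exact: Lub.
  rewrite ler_pdivlMr // => ha; lra.
- have := IH v Vv.
  rewrite (_ : P v t = fun s => p s + v s); last first.
    by rewrite funeqE => s; rewrite /P t0 mul0r addr0.
  by rewrite t0 mulr0 add0r.
Qed.

Lemma subgrad : exists U : S -> R, forall h : S -> R,
  f p + \sum_s U s * h s <= f (fun s => p s + h s).
Proof.
have [U hU] := subgrad_seq (enum S).
by exists U => h; apply: hU => s; rewrite mem_enum.
Qed.

End HB.

Section FM.
Variables (R : realType) (S : finType) (c : (S -> R) -> \bar R).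
Local Notation K := (@simplex R S).
Hypotheses (c0 : cost_nonneg c) (cg : grounded c) (cc : cost_convex c) (cl : cost_lsc c).

Lemma simplex_mix q1 q2 (l : R) : K q1 -> K q2 -> 0 <= l <= 1 ->
  K (fun s => l * q1 s + (1 - l) * q2 s).
Proof.
move=> [q10 q11] [q20 q21] /andP[l0 l1]; split.
  by move=> s; rewrite addr_ge0 // mulr_ge0 // ?subr_ge0.
by rewrite big_split /= -!mulr_sumr q11 q21; ring.
Qed.

Lemma c_real q : K q -> (c q < +oo)%E -> c q = (fine (c q))%:E.
Proof. by move=> Kq cq; rewrite fineK // ge0_fin_numE // c0. Qed.

Let Kf q := K q /\ (c q < +oo)%E.

Section G.
Variable k : R.
Hypothesis k0 : 0 <= k.

Let T (x : S -> R) := [set y : R | exists2 q, Kf q & y = fine (c q) + k * \sum_s `|x s - q s|].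

Definition gk x := inf (T x).

Let T_ne x : T x !=set0.
Proof.
have [q Kq cq] := grounded_small cg ltr01.
exists (fine (c q) + k * \sum_s `|x s - q s|), q => //; split => //.
by apply: lt_trans cq _; rewrite ltry.
Qed.

Let T_lb x : lbound (T x) 0.
Proof.
move=> _ [q [Kq _] ->]; rewrite addr_ge0 // ?fine_ge0 ?c0 //.
by rewrite mulr_ge0 // sumr_ge0.
Qed.

Lemma gk_le x q : Kf q -> gk x <= fine (c q) + k * \sum_s `|x s - q s|.
Proof. by move=> Kq; apply: ge_inf; [exists 0; exact: T_lb | exists q]. Qed.

Lemma gk_ge x m : (forall q, Kf q -> m <= fine (c q) + k * \sum_s `|x s - q s|) -> m <= gk x.
Proof. by move=> H; apply: lb_le_inf => // _ [q Kq ->]; exact: H. Qed.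

Lemma gk_conv x y (l : R) : 0 < l -> l < 1 ->
  gk (fun s => l * x s + (1 - l) * y s) <= l * gk x + (1 - l) * gk y.
Proof.
move=> l0 l1.
set z := fun s => l * x s + (1 - l) * y s.
have step : forall q1 q2, Kf q1 -> Kf q2 ->
    gk z <= l * (fine (c q1) + k * \sum_s `|x s - q1 s|) +
            (1 - l) * (fine (c q2) + k * \sum_s `|y s - q2 s|).
  move=> q1 q2 [K1 f1] [K2 f2].
  set q := fun s => l * q1 s + (1 - l) * q2 s.
  have Kq : K q by apply: simplex_mix => //; apply/andP; split; lra.
  have cq := cc K1 K2 l0 l1.
  rewrite (c_real K1 f1) (c_real K2 f2) -!EFinM -EFinD in cq.
  have fq : (c q < +oo)%E by apply: le_lt_trans cq _; rewrite ltry.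
  rewrite (c_real Kq fq) lee_fin in cq.
  have nq : \sum_s `|z s - q s| <= l * \sum_s `|x s - q1 s| + (1 - l) * \sum_s `|y s - q2 s|.
    rewrite !mulr_sumr -big_split /=; apply: ler_sum => s _.
    rewrite (_ : z s - q s = l * (x s - q1 s) + (1 - l) * (y s - q2 s)); last by rewrite /z /q; ring.
    apply: le_trans (ler_normD _ _) _.
    have l1p : 0 <= 1 - l by lra.
    by rewrite !normrM (ger0_norm (ltW l0)) (ger0_norm l1p).
  apply: le_trans (gk_le z (conj Kq fq)) _.
  have := ler_wpM2l k0 nq; lra.
have step2 : forall q2, Kf q2 ->
    gk z - (1 - l) * (fine (c q2) + k * \sum_s `|y s - q2 s|) <= l * gk x.
  move=> q2 K2.
  rewrite -ler_pdivrMl // mulrC; apply: gk_ge => q1 K1.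
  rewrite ler_pdivrMr // mulrC; have := step q1 q2 K1 K2; lra.
have : (gk z - l * gk x) / (1 - l) <= gk y.
  apply: gk_ge => q2 K2.
  rewrite ler_pdivrMr ?subr_gt0 // mulrC; have := step2 q2 K2; lra.
rewrite ler_pdivrMr ?subr_gt0 //; lra.
Qed.

End G.

Lemma FM p (a : R) : K p -> (a%:E < c p)%E ->
  exists U : S -> R, forall q, K q -> ((a + \sum_s U s * (q s - p s))%:E <= c q)%E.
Proof.
move=> Kp ha.
have [eps e0 hl] := cl Kp ha.
set k := (`|a| + 1) / eps.
have k0 : 0 <= k by rewrite /k divr_ge0 // ?ltW // addr_ge0.
have gp : a <= gk k p.
  apply: gk_ge => q [Kq fq].
  have cr := c_real Kq fq.
  have fc0 : 0 <= fine (c q) by rewrite fine_ge0 // c0.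
  have s0 : 0 <= \sum_s `|p s - q s| by rewrite sumr_ge0.
  have [near|far] := pselect (forall s, `|q s - p s| < eps).
    have := hl q Kq near; rewrite cr lte_fin => aq.
    have := mulr_ge0 k0 s0; lra.
  move/existsNP: far => [s /negP]; rewrite -leNgt => es.
  have : `|p s - q s| <= \sum_s `|p s - q s|.
    by rewrite (bigD1 s) //= ler_wpDr // sumr_ge0.
  rewrite distrC => hs.
  have : k * eps <= k * \sum_s `|p s - q s| by rewrite ler_wpM2l //; lra.
  rewrite /k mulfVK ?gt_eqF // => hk.
  have := ler_norm a; lra.
have [U hU] := subgrad (@gk_conv k k0) p.
exists U => q Kq.
case E: (c q) => [r| |]; last 2 first.
- by rewrite leey.
- by have := c0 Kq; rewrite E.
rewrite lee_fin.
have fq : (c q < +oo)%E by rewrite E ltry.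
have := gk_le k0 q (conj Kq fq); rewrite E /=.
under eq_bigr do rewrite subrr normr0.
rewrite big1 // mulr0 addr0 => gq.
have := hU (fun s => q s - p s).
rewrite (_ : (fun s => p s + (q s - p s)) = q); last by rewrite funeqE => s; ring.
lra.
Qed.

End FM.

Section Uniq.
Variables (R : realType) (S : finType) (Pi : set R) (pi0 pi1 : R)
  (pref : mh_contract R S -> mh_contract R S -> Prop).
Local Notation K := (@simplex R S).
Local Notation cst := (@const_contract R S).

Lemma c_le c1 u1 c2 u2 : Pi pi0 -> Pi pi1 -> pi0 < pi1 ->
  parsimonious_rep Pi pi0 pi1 pref c1 u1 ->
  parsimonious_rep Pi pi0 pi1 pref c2 u2 -> unbounded Pi pref ->
  forall p, K p -> (c2 p <= c1 p)%E.
Proof.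
move=> P0 P1 lt r1 r2 ub p Kp.
have uu := u_unique P0 P1 lt r1 r2.
have EUe : forall z, is_lottery Pi z -> EU u2 z = EU u1 z.
  by move=> z hz; apply: EU_eq hz => y; rewrite inE => /uu.
have [[c10 [c1g [c1c c1l]]] _ _ rep1] := r1.
have [[c20 [c2g [c2c c2l]]] _ _ rep2] := r2.
rewrite leNgt; apply/negP => lt12.
have f1 : (c1 p < +oo)%E by apply: lt_le_trans lt12 _; rewrite leey.
have e1 := c_real c10 Kp f1; set r1' := fine (c1 p) in e1.
have [a [ra ac]] : exists a, r1' < a /\ (a%:E < c2 p)%E.
  move: lt12; rewrite e1; case: (c2 p) => [r2'| |] //.
  - by rewrite lte_fin => h; exists ((r1' + r2') / 2); rewrite lte_fin; split; lra.
  - by move=> _; exists (r1' + 1); rewrite ltry; split => //; lra.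
have [U hU] := FM c20 c2g c2c c2l Kp ac.
have [w [hw ew]] := contract_onto r1 ub U.
have ew2 : forall s, EU u2 (w s) = U s by move=> s; rewrite EUe ?ew.
set x := \sum_s U s * p s - a.
have [z [hz ez]] := EU_onto r1 ub x.
have ez2 : EU u2 z = x by rewrite EUe ?ez.
have v2 : (value c2 u2 w <= x%:E)%E.
  apply: ge_ereal_sup => _ [q Kq <-].
  under eq_bigr do rewrite ew2.
  have := hU q Kq; have := c20 _ Kq; case: (c2 q) => [r| |] //.
  2: by move=> _ _; rewrite /= leNye.
  rewrite !lee_fin => _ h; rewrite /x.
  move: h; rewrite (_ : \sum_s U s * (q s - p s) = \sum_s U s * q s - \sum_s U s * p s).
    lra.
  by rewrite -sumrB; apply: eq_bigr => s _; ring.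
have pz : pref (cst z) w.
  by apply/(rep2 _ _ (const_contractP hz) hw); rewrite value_const // ez2.
have v1 := iffLR (rep1 _ _ (const_contractP hz) hw) pz.
rewrite value_const // ez in v1.
have : ((- r1' + \sum_s U s * p s)%:E <= value c1 u1 w)%E.
  apply: le_ereal_sup_tmp; exists (- c1 p + (\sum_s EU u1 (w s) * p s)%:E)%E.
    by exists p.
  have eS : \sum_s EU u1 (w s) * p s = \sum_s U s * p s by apply: eq_bigr => s _; rewrite ew.
  by rewrite e1 eS -EFinN -EFinD lee_fin.
move=> /le_trans /(_ v1); rewrite lee_fin /x; lra.
Qed.

End Uniq.

Unset Implicit Arguments.
Set Strict Implicit.

Theorem proposition2 (R : realType) (S : finType) (Pi : set R) (pi0 pi1 : R)
    (pref : mh_contract R S -> mh_contract R S -> Prop) :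
  (0 < #|S|)%N -> convex_set_R Pi -> Pi pi0 -> Pi pi1 -> pi0 < pi1 ->
  moral_hazard_pref Pi pi0 pi1 pref -> unbounded Pi pref ->
  exists c u, parsimonious_rep Pi pi0 pi1 pref c u /\
    forall c' u', parsimonious_rep Pi pi0 pi1 pref c' u' ->
      (forall p, simplex p -> c' p = c p) /\ (forall x, Pi x -> u' x = u x).
Proof.
move=> _ _ P0 P1 lt [c [u rp]] ub.
exists c, u; split => // c' u' rp'; split.
  move=> p Kp; apply/eqP; rewrite eq_le.
  by rewrite (c_le P0 P1 lt rp rp') ?(c_le P0 P1 lt rp' rp).
exact: u_unique P0 P1 lt rp rp'.
Qed.
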